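(* If $A\subseteq\mathbb{Z}^d$ is finite, then $\|\min_{\preceq}(A^* )\|\leq d\cdot\left(2+(1+2\cdot\|A\|)^d\cdot\|A\|\right)^d$.
   Context: $A^*$ is the submonoid of $(\mathbb{Z}^d,+)$ generated by $A$ (finite sums of elements of $A$). For $x\in\mathbb{Z}^d$, $\|x\|=\max_i|x(i)|$; for a finite set $Y$, $\|Y\|=\max_{y\in Y}\|y\|$ (with $\max\emptyset=0$). The partial order $\preceq$ on $\mathbb{Z}^d$: $x\preceq y$ iff $x$ and $y$ have the same componentwise sign vector and $|x(i)|\leq|y(i)|$ for all $i$; $\min_{\preceq}(Y)$ is the (finite) set of $\preceq$-minimal elements of $Y$. *)

(* Defs.v *)
From mathcomp Require Import all_boot all_order all_algebra.
Set Implicit Arguments. Unset Strict Implicit. Unset Printing Implicit Defensive.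
Import Order.TTheory GRing.Theory Num.Theory.
Local Open Scope ring_scope.

Definition vec (d : nat) := {ffun 'I_d -> int}.

(* A^* : submonoid of (Z^d,+) generated by A (finite sums of elements of A,
   the empty sum being 0). A finite set A is given as a finite list. *)
Inductive in_monoid (d : nat) (A : seq (vec d)) : vec d -> Prop :=
| in_monoid0 : in_monoid A 0
| in_monoidS : forall x a, in_monoid A x -> a \in A -> in_monoid A (x + a).

Definition vnorm (d : nat) (x : vec d) : nat := (\max_(i < d) `|x i|%N)%N.

(* ||Y|| = max_{y in Y} ||y||, with max of the empty set = 0 *)
Definition snorm (d : nat) (Y : seq (vec d)) : nat := (\max_(y <- Y) vnorm y)%N.

Definition vle (d : nat) (x y : vec d) : Prop :=
  forall i : 'I_d, sgz (x i) = sgz (y i) /\ (`|x i| <= `|y i|)%N.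

Definition minimal_in (d : nat) (Y : vec d -> Prop) (y : vec d) : Prop :=
  Y y /\ forall x, Y x -> vle x y -> x = y.

(* Main.v *)
Require Import Defs.
From mathcomp Require Import all_boot all_order all_algebra.
From mathcomp Require Import zify ring lra.
From Stdlib Require Import Classical.
Set Implicit Arguments. Unset Strict Implicit. Unset Printing Implicit Defensive.
Import Order.TTheory GRing.Theory Num.Theory.
Local Open Scope ring_scope.

Definition Xs (d m : nat) (V : seq (vec d)) (c : {ffun 'I_m -> nat}) : vec d :=
  \sum_(j < m) V`_j *+ c j.

Lemma XsE d m (V : seq (vec d)) (c : {ffun 'I_m -> nat}) i :
  Xs V c i = \sum_(j < m) V`_j i * (c j)%:Z.
Proof.
rewrite /Xs sum_ffunE; apply: eq_bigr => j _.
by rewrite ffunMnE -mulr_natr natz.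
Qed.

Definition cadd m (c1 c2 : {ffun 'I_m -> nat}) : {ffun 'I_m -> nat} :=
  [ffun j => (c1 j + c2 j)%N].
Definition csub m (c1 c2 : {ffun 'I_m -> nat}) : {ffun 'I_m -> nat} :=
  [ffun j => (c1 j - c2 j)%N].
Definition cdelta m (j0 : 'I_m) : {ffun 'I_m -> nat} :=
  [ffun j => nat_of_bool (j == j0)].
Definition czero m : {ffun 'I_m -> nat} := [ffun _ => 0%N].
Definition cle m (c1 c2 : {ffun 'I_m -> nat}) := forall j, (c1 j <= c2 j)%N.
Definition csize m (c : {ffun 'I_m -> nat}) : nat := (\sum_(j < m) c j)%N.

Lemma Xs_add d m (V : seq (vec d)) (c1 c2 : {ffun 'I_m -> nat}) :
  Xs V (cadd c1 c2) = Xs V c1 + Xs V c2.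
Proof.
rewrite /Xs -big_split /=; apply: eq_bigr => j _.
by rewrite ffunE mulrnDr.
Qed.

Lemma Xs_zero d m (V : seq (vec d)) : Xs V (czero m) = 0.
Proof. by rewrite /Xs big1 // => j _; rewrite ffunE mulr0n. Qed.

Lemma Xs_delta d m (V : seq (vec d)) (j0 : 'I_m) : Xs V (cdelta j0) = V`_j0.
Proof.
rewrite /Xs (bigD1 j0) //= ffunE eqxx mulr1n big1 ?addr0 // => j /negbTE Hj.
by rewrite ffunE Hj mulr0n.
Qed.

Lemma cadd_sub m (c1 c2 : {ffun 'I_m -> nat}) :
  cle c1 c2 -> cadd c1 (csub c2 c1) = c2.
Proof. by move=> H; apply/ffunP => j; rewrite !ffunE subnKC. Qed.

Lemma Xs_sub d m (V : seq (vec d)) (c1 c2 : {ffun 'I_m -> nat}) :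
  cle c1 c2 -> Xs V (csub c2 c1) = Xs V c2 - Xs V c1.
Proof.
move=> H; have := Xs_add V c1 (csub c2 c1); rewrite cadd_sub // => ->.
by rewrite [Xs V c1 + _]addrC addrK.
Qed.

Lemma csize_add m (c1 c2 : {ffun 'I_m -> nat}) :
  csize (cadd c1 c2) = (csize c1 + csize c2)%N.
Proof. by rewrite /csize -big_split; apply: eq_bigr => j _; rewrite ffunE. Qed.

Lemma csize_delta m (j0 : 'I_m) : csize (cdelta j0) = 1%N.
Proof.
rewrite /csize (bigD1 j0) //= ffunE eqxx big1 // => j /negbTE Hj.
by rewrite ffunE Hj.
Qed.

Lemma in_monoid_add d (A : seq (vec d)) x z :
  in_monoid A x -> in_monoid A z -> in_monoid A (x + z).
Proof.
move=> Hx; elim=> [|z' a _ IH Ha]; first by rewrite addr0.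
by rewrite addrA; apply: in_monoidS.
Qed.

Lemma in_monoid_mul d (A : seq (vec d)) a n :
  a \in A -> in_monoid A (a *+ n).
Proof.
move=> Ha; elim: n => [|n IH]; first by rewrite mulr0n; apply: in_monoid0.
by rewrite mulrSr; apply: in_monoidS.
Qed.

Lemma in_monoid_Xs d m (A V : seq (vec d)) (c : {ffun 'I_m -> nat}) :
  size V = m -> {subset V <= A} -> in_monoid A (Xs V c).
Proof.
move=> HV HVA; rewrite /Xs; apply: (big_ind (in_monoid A)).
- exact: in_monoid0.
- exact: in_monoid_add.
- move=> j _; apply: in_monoid_mul; apply: HVA; apply: mem_nth.
  by rewrite HV ltn_ord.
Qed.

Lemma in_monoid_rep d (A V : seq (vec d)) x :
  {subset A <= V} -> in_monoid A x ->
  exists c : {ffun 'I_(size V) -> nat}, x = Xs V c.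
Proof.
move=> HAV; elim=> [|x' a _ [c ->] Ha].
  by exists (czero _); rewrite Xs_zero.
have Hi : (index a V < size V)%N by rewrite index_mem HAV.
exists (cadd c (cdelta (Ordinal Hi))).
by rewrite Xs_add Xs_delta /= nth_index // HAV.
Qed.

Lemma box_count d (lo : 'I_d -> int) (w : nat) (L : seq (vec d)) :
  (0 < w)%N -> uniq L ->
  (forall v, v \in L -> forall i, lo i <= v i < lo i + w%:Z) ->
  (size L <= w ^ d)%N.
Proof.
case: w => // w _ HU HL.
pose f (g : {ffun 'I_d -> 'I_w.+1}) : vec d := [ffun i => lo i + (g i : nat)%:Z].
have -> : (w.+1 ^ d)%N = #|{ffun 'I_d -> 'I_w.+1}| by rewrite card_ffun !card_ord.
rewrite -(size_image f).
apply: uniq_leq_size => // v Hv.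
apply/imageP.
exists [ffun i => inord `|v i - lo i|%N] => //.
have Hab i : (`|v i - lo i|%N < w.+1)%N.
  have /andP[H1 H2] := HL v Hv i.
  rewrite -ltz_nat gez0_abs ?subr_ge0 //; lia.
apply/ffunP => i; rewrite !ffunE inordK //.
have /andP[H1 H2] := HL v Hv i.
rewrite gez0_abs ?subr_ge0 //; lia.
Qed.

Lemma vec0E d i : (0 : vec d) i = 0.
Proof. by rewrite ffunE. Qed.
Lemma vecNE d (v : vec d) i : (- v) i = - v i.
Proof. by rewrite ffunE. Qed.
Lemma vecDE d (v w : vec d) i : (v + w) i = v i + w i.
Proof. by rewrite ffunE. Qed.
Lemma vecBE d (v w : vec d) i : (v - w) i = v i - w i.
Proof. by rewrite !ffunE. Qed.


Lemma seq_argmin (T : eqType) (r : rel T) (s : seq T) :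
  (forall x y, x \in s -> y \in s -> r x y || r y x) ->
  (forall x y z, x \in s -> y \in s -> z \in s -> r x y -> r y z -> r x z) ->
  s != [::] -> exists2 x, x \in s & forall y, y \in s -> r x y.
Proof.
elim: s => [//|a s IH] Htot Htr _.
have Hsub : forall x, x \in s -> x \in a :: s by move=> x Hx; rewrite inE Hx orbT.
case: (altP (s =P [::])) => [-> | Hs].
  exists a; first by rewrite inE eqxx.
  move=> y; rewrite inE => /eqP ->.
  by have := Htot a a; rewrite inE eqxx orbb => ->.
have [x' Hx' Hmin] := IH (fun x y Hx Hy => Htot x y (Hsub _ Hx) (Hsub _ Hy))
  (fun x y z Hx Hy Hz => Htr x y z (Hsub _ Hx) (Hsub _ Hy) (Hsub _ Hz)) Hs.
have Ha : a \in a :: s by rewrite inE eqxx.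
case/orP: (Htot a x' Ha (Hsub _ Hx')) => Hax.
  exists a => // y; rewrite inE => /orP[/eqP -> | Hy].
    by have := Htot a a Ha Ha; rewrite orbb.
  apply: (Htr a x' y) => //; try exact: Hsub; exact: Hmin.
exists x'; first exact: Hsub.
move=> y; rewrite inE => /orP[/eqP -> // | Hy]; exact: Hmin.
Qed.

Definition Inv m (c u : {ffun 'I_m -> nat}) :=
  cle u c /\ exists p q : nat, (0 < q)%N /\
    forall j, (q * u j <= p * c j)%N /\ (p * c j <= q * (u j).+1)%N.

Lemma Inv_prop m (c u : {ffun 'I_m -> nat}) :
  Inv c u -> forall j, (csize u * c j <= csize c * (u j).+1)%N.
Proof.
move=> [Hle [p [q [Hq H]]]] j.
have Hs : (q * csize u <= p * csize c)%N.
  rewrite /csize !big_distrr /=; apply: leq_sum => k _; exact: (H k).1.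
have [H1 H2] := H j.
rewrite -(leq_pmul2l Hq).
nia.
Qed.

Lemma Inv0 m (c : {ffun 'I_m -> nat}) : Inv c (czero m).
Proof.
split; first by move=> j; rewrite ffunE.
exists 0%N, 1%N; split => // j; rewrite ffunE; lia.
Qed.

Lemma Inv_step m (c u : {ffun 'I_m -> nat}) :
  Inv c u -> (csize u < csize c)%N ->
  exists j, (u j < c j)%N /\ Inv c (cadd u (cdelta j)).
Proof.
move=> [Hle [p [q [Hq H]]]] Hlt.
have [j0 Hj0] : exists j, (u j < c j)%N.
  case: (pickP (fun j => (u j < c j)%N)) => [j Hj | Hn]; first by exists j.
  exfalso; move: Hlt; rewrite /csize (eq_bigr (fun j => c j)) ?ltnn // => j _.
  by apply/eqP; rewrite eqn_leq Hle /= leqNgt Hn.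
have Hu' k j : cadd u (cdelta j) k = (u k + (k == j))%N by rewrite !ffunE.
case: (pickP (fun j => (u j < c j) && (q * (u j).+1 <= p * c j))%N) => [j /andP[Hj1 Hj2] | Hn].
  exists j; split => //; split.
    move=> k; rewrite Hu'; case: (altP (k =P j)) => [-> | _]; first by rewrite addn1.
    by rewrite addn0.
  exists p, q; split => // k; rewrite Hu'.
  case: (altP (k =P j)) => [-> | _] /=; last by rewrite addn0; exact: H.
  have [_ H2] := H j; rewrite addn1; split => //; lia.
pose s := [seq j <- enum 'I_m | (u j < c j)%N].
have Hs : s != [::].
  apply/eqP => Hs; have : j0 \in s by rewrite mem_filter Hj0 mem_enum.
  by rewrite Hs.
have Hms j : (j \in s) = (u j < c j)%N by rewrite mem_filter mem_enum andbT.
pose r := fun a b : 'I_m => ((u a).+1 * c b <= (u b).+1 * c a)%N.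
have [js Hjs Hmin] : exists2 x, x \in s & forall y, y \in s -> r x y.
  apply: seq_argmin => //.
    move=> x y _ _; rewrite /r; apply/orP; case: (leqP ((u x).+1 * c y) ((u y).+1 * c x)) => H0.
      by left. by right; apply: ltnW.
  move=> x y z Hx Hy Hz; rewrite /r.
  rewrite Hms in Hy.
  move=> Hxy Hyz; rewrite -(leq_pmul2l (_ : 0 < c y)%N); last lia.
  have h1 := leq_mul (leqnn (c z)) Hxy.
  have h2 := leq_mul (leqnn (c x)) Hyz.
  nia.
rewrite Hms in Hjs.
have HB : forall j, (u j < c j)%N -> (p * c j < q * (u j).+1)%N.
  move=> j Hj; have := Hn j; rewrite Hj /= => /negbT; rewrite -ltnNge //.
exists js; split => //; split.
  move=> k; rewrite Hu'; case: (altP (k =P js)) => [-> | _]; first by rewrite addn1.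
  by rewrite addn0.
exists (u js).+1, (c js); split; first lia.
move=> k; rewrite Hu'; case: (altP (k =P js)) => [-> | Hk] /=.
  rewrite addn1; split; lia.
rewrite addn0.
have Hk1 := Hle k.
case: (ltnP (u k) (c k)) => Hk2.
  have Hr := Hmin k; rewrite Hms in Hr; have {}Hr := Hr Hk2; rewrite /r in Hr.
  have [H1 H2] := H k; have H3 := HB js Hjs.
  split; last lia.
  rewrite -(leq_pmul2l Hq).
  have h1 := leq_mul (leqnn (c js)) H1.
  have h2 : (c k * (p * c js) < c k * (q * (u js).+1))%N.
    by rewrite ltn_pmul2l //; lia.
  nia.
have Huk : u k = c k by apply/eqP; rewrite eqn_leq Hk1 Hk2.
rewrite Huk; split; last nia.
case: (posnP (c k)) => Hck; first by rewrite Hck !muln0.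
have [H1 _] := H k; rewrite Huk in H1.
have H3 := HB js Hjs.
exfalso; nia.
Qed.


Definition minimal d m (V : seq (vec d)) (c : {ffun 'I_m -> nat}) :=
  forall c'', cle c'' c -> (forall i, 0 <= Xs V c'' i) ->
    (forall i, Xs V c'' i <= Xs V c i) -> c'' = czero m \/ c'' = c.

Definition Jn m (c : {ffun 'I_m -> nat}) : nat := (\sum_(j < m) ((0 < c j)%N : nat))%N.

Lemma zero_sub d m (V : seq (vec d)) (c c'' : {ffun 'I_m -> nat}) i0 j :
  (forall i, 0 <= Xs V c i) -> minimal V c -> 0 < Xs V c i0 -> cle c'' c -> Xs V c'' = 0 -> (0 < c'' j)%N -> False.
Proof.
move=> Hsol Hmin Hpos Hle H0 Hj.
have Hs1 : forall i, 0 <= Xs V c'' i by move=> i; rewrite H0 ffunE.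
have Hs2 : forall i, Xs V c'' i <= Xs V c i.
  by move=> i; rewrite H0 ffunE.
have [H|H] := Hmin c'' Hle Hs1 Hs2.
  by move: Hj; rewrite H ffunE.
by move: Hpos; rewrite -H H0 ffunE ltxx.
Qed.

Lemma Jn_count m (c : {ffun 'I_m -> nat}) :
  count (fun j => (0 < c j)%N) (enum 'I_m) = Jn c.
Proof.
rewrite -sum1_count /Jn big_mkcond /=.
rewrite big_enum /=; apply: eq_bigr => j _; by case: (0 < c j)%N.
Qed.

Lemma J_bound d m (V : seq (vec d)) (M : nat) (c : {ffun 'I_m -> nat}) i0 :
  size V = m -> uniq V -> (forall (j : 'I_m) i, `|V`_j i| <= M%:Z) ->
  (forall i, 0 <= Xs V c i) -> minimal V c -> 0 < Xs V c i0 ->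
  (1 + 2 * Jn c <= (2 * M + 1) ^ d)%N.
Proof.
move=> HV HU HM Hsol Hmin Hpos.
pose Jl := [seq V`_j | j : 'I_m <- [seq j <- enum 'I_m | (0 < c j)%N]].
have Hsz : size Jl = Jn c by rewrite size_map size_filter Jn_count.
have HJ v : v \in Jl -> exists2 j : 'I_m, (0 < c j)%N & v = V`_j.
  case/mapP => j; rewrite mem_filter mem_enum andbT => Hj ->; by exists j.
have Hdle (j : 'I_m) : (0 < c j)%N -> cle (cdelta j) c.
  move=> Hj k; rewrite ffunE; case: (altP (k =P j)) => [-> | _] //.
have Hnz v : v \in Jl -> v != 0.
  move=> /HJ [j Hj ->]; apply/eqP => H0.
  apply: (zero_sub (c'' := cdelta j) (j := j) Hsol Hmin Hpos (Hdle j Hj)).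
    by rewrite Xs_delta.
  by rewrite ffunE eqxx.
have Hnopp v : v \in Jl -> - v \notin Jl.
  move=> Hv; apply/negP => Hv'.
  have [j Hj Ej] := HJ v Hv; have [j' Hj' Ej'] := HJ _ Hv'.
  case: (altP (j =P j')) => [Ejj | Hjj].
    have := Hnz v Hv; rewrite -Ejj -Ej in Ej'.
    suff -> : v = 0 by rewrite eqxx.
    apply/ffunP => i; have := congr1 (fun f : vec d => f i) Ej'; rewrite !ffunE /=; move: (v i) => z; lia.
  apply: (zero_sub (c'' := cadd (cdelta j) (cdelta j')) (j := j) Hsol Hmin Hpos).
  - move=> k; rewrite !ffunE.
    case: (altP (k =P j)) => [-> | Hk]; first by rewrite (negbTE Hjj) addn0.
    by rewrite addnC /=; case: (altP (k =P j')) => [-> | _].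
  - by rewrite Xs_add !Xs_delta -Ej -Ej' subrr.
  - by rewrite !ffunE eqxx.
pose L0 := 0 :: Jl ++ map -%R Jl.
have HuJ : uniq Jl.
  rewrite map_inj_in_uniq; first by apply: filter_uniq; apply: enum_uniq.
  move=> x y _ _ Hxy.
  apply/val_inj/eqP; rewrite -(nth_uniq 0 _ _ HU) ?HV ?ltn_ord //; exact/eqP.
have HuL : uniq L0.
  rewrite /L0 /= cat_uniq mem_cat negb_or (map_inj_uniq oppr_inj) /=.
  rewrite HuJ andbT.
  apply/andP; split; [apply/andP; split | ].
  - by apply/negP => /Hnz; rewrite eqxx.
  - apply/negP => /mapP [v Hv /eqP]; rewrite eq_sym oppr_eq0 => /eqP Hv0.
    by move: (Hnz v Hv); rewrite Hv0 eqxx.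
  - apply/hasP => [[v /mapP [v' Hv' ->] Hv'']].
    by move: (Hnopp v' Hv'); rewrite Hv''.
have Hbox v : v \in L0 -> forall i, - (M%:Z) <= v i < - (M%:Z) + (2 * M + 1)%N%:Z.
  have Hb (j : 'I_m) i : - (M%:Z) <= V`_j i <= M%:Z.
    rewrite -ler_norml; exact: HM.
  rewrite /L0 inE mem_cat => /orP [/eqP -> | /orP [/HJ [j _ ->] | /mapP [v' /HJ [j _ ->] ->]]] i.
  - rewrite vec0E; lia.
  - have := Hb j i; move: (V`_j i) => z; lia.
  - have := Hb j i; rewrite vecNE; move: (V`_j i) => z; lia.
have Hw : (0 < 2 * M + 1)%N by rewrite addn1.
have := box_count (lo := fun _ => - (M%:Z)) Hw HuL Hbox.
rewrite /L0 /= size_cat !size_map size_filter Jn_count; lia.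
Qed.


Lemma Posz_sum m (F : 'I_m -> nat) : ((\sum_(j < m) F j)%N)%:Z = \sum_(j < m) (F j)%:Z.
Proof. by rewrite -natz natr_sum; apply: eq_bigr => j _; rewrite natz. Qed.

Definition vval d m (V : seq (vec d)) (w : {ffun 'I_m -> nat}) (e : {ffun 'I_d -> nat}) : vec d :=
  [ffun i => Xs V w i - (e i)%:Z].

Lemma MC d m (V : seq (vec d)) (c w1 w2 : {ffun 'I_m -> nat}) (e1 e2 : {ffun 'I_d -> nat}) i0 :
  minimal V c -> cle w1 w2 -> cle w2 c -> (forall i, (e1 i <= e2 i)%N) ->
  (forall i, (e2 i)%:Z <= Xs V c i) -> (e2 i0)%:Z < Xs V c i0 ->
  vval V w1 e1 = vval V w2 e2 -> w1 = w2.
Proof.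
move=> Hmin H12 H2c He He2 Hi0 Hv.
have Heq i : Xs V (csub w2 w1) i = (e2 i)%:Z - (e1 i)%:Z.
  rewrite Xs_sub // vecBE.
  have := congr1 (fun f : vec d => f i) Hv; rewrite !ffunE.
  move: (Xs V w1 i) (Xs V w2 i) => a b; lia.
have Hle : cle (csub w2 w1) c by move=> j; rewrite ffunE; apply: leq_trans (leq_subr _ _) (H2c j).
have Hs1 i : 0 <= Xs V (csub w2 w1) i by rewrite Heq; have := He i; lia.
have Hs2 i : Xs V (csub w2 w1) i <= Xs V c i.
  rewrite Heq; have := He2 i; move: (Xs V c i) => a; lia.
case: (Hmin _ Hle Hs1 Hs2) => H.
  apply/ffunP => j; have := congr1 (fun f : {ffun 'I_m -> nat} => f j) H; rewrite !ffunE.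
  have := H12 j; move: (w1 j) (w2 j) => a b; lia.
exfalso; have := Heq i0; rewrite H; have := He i0; move: (Xs V c i0) Hi0 => a; lia.
Qed.

Definition Gs d m (V : seq (vec d)) (c : {ffun 'I_m -> nat}) i : int :=
  \sum_(j < m) V`_j i * ((0 < c j)%N : nat)%:Z.

Lemma region d m (V : seq (vec d)) (M : nat) (c u : {ffun 'I_m -> nat})
    (e : {ffun 'I_d -> nat}) t i :
  (forall (j : 'I_m) i, `|V`_j i| <= M%:Z) -> (forall i, 0 <= Xs V c i) ->
  Inv c u -> csize u = t.+1 ->
  (t * `|Xs V c i|%N %/ csize c <= e i)%N ->
  (e i <= t.+1 * `|Xs V c i|%N %/ csize c)%N ->
  - ((M * Jn c)%N%:Z) - Gs V c i <= vval V u e i <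
  - ((M * Jn c)%N%:Z) - Gs V c i + (2 * M * Jn c + M + 1)%N%:Z.
Proof.
move=> HM Hsol HI Hsz He1 He2.
have HIp := Inv_prop HI.
have Hle : cle u c := HI.1.
have HKu : (csize u <= csize c)%N by apply: leq_sum => j _; exact: Hle.
rewrite Hsz in HIp.
move: He1 He2 HKu HIp; rewrite Hsz.
set K := csize c => He1 He2 HKu HIp.
have HK : (0 < K)%N by apply: leq_trans HKu.
set sn := `|Xs V c i|%N in He1 He2 *.
have Hs : sn%:Z = Xs V c i by rewrite /sn gez0_abs.
have Hd1 : (K * e i <= t.+1 * sn)%N.
  apply: leq_trans (leq_mul (leqnn K) He2) _; rewrite mulnC; exact: leq_divM.
have Hd2 : (t * sn < K * (e i).+1)%N.
  apply: leq_trans (ltn_ceil _ HK) _; rewrite mulnC leq_mul2l ltnS He1 orbT //.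
have HVb (j : 'I_m) : - (M%:Z) <= V`_j i <= M%:Z by rewrite -ler_norml; exact: HM.
have Hsm : (sn <= M * K)%N.
  rewrite -lez_nat Hs XsE PoszM /K /csize Posz_sum mulr_sumr.
  apply: ler_sum => j _; apply: ler_wpM2r => //; by case/andP: (HVb j).
pose N (j : 'I_m) : int := ((0 < c j)%N : nat)%:Z * ((K * u j)%N%:Z - (t.+1 * c j)%N%:Z + K%:Z).
have Hkey : K%:Z * Xs V u i - t.+1%:Z * Xs V c i =
    \sum_(j < m) V`_j i * N j - K%:Z * Gs V c i.
  rewrite !XsE /Gs !mulr_sumr -!sumrB; apply: eq_bigr => j _.
  rewrite /N; case: (posnP (c j)) => Hc.
    have Hu : u j = 0%N by apply/eqP; rewrite -leqn0 -Hc Hle.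
    rewrite Hu Hc /=; ring.
  rewrite !PoszM /=; ring.
have HN0 j : 0 <= N j.
  rewrite /N; apply: mulr_ge0 => //.

  have := HIp j; clear; move: (u j) (c j) K t => a b k t0; nia.
have HNs : \sum_(j < m) N j = K%:Z * (Jn c)%:Z.
  have -> : \sum_(j < m) N j = \sum_(j < m) (K%:Z * (u j)%:Z - t.+1%:Z * (c j)%:Z
      + K%:Z * ((0 < c j)%N : nat)%:Z).
    apply: eq_bigr => j _; rewrite /N; case: (posnP (c j)) => Hc.
      have Hu : u j = 0%N by apply/eqP; rewrite -leqn0 -Hc Hle.
      rewrite Hu Hc /=; ring.
    rewrite !PoszM /=; ring.
  rewrite big_split /= sumrB -!mulr_sumr /Jn Posz_sum.
  have Hsu : \sum_(j < m) (u j)%:Z = t.+1%:Z by rewrite -Posz_sum -Hsz.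
  have Hsc : \sum_(j < m) (c j)%:Z = K%:Z by rewrite -Posz_sum.
  rewrite Hsu Hsc; ring.
have HSb : `|\sum_(j < m) V`_j i * N j| <= M%:Z * (K%:Z * (Jn c)%:Z).
  apply: le_trans (ler_norm_sum _ _ _) _.
  rewrite -HNs mulr_sumr; apply: ler_sum => j _.
  rewrite normrM (ger0_norm (HN0 j)); apply: ler_wpM2r => //; exact: HM.
move: HSb; rewrite ler_norml => /andP [HS1 HS2].
have HKz : 0 < K%:Z by rewrite ltz_nat.
rewrite ffunE.
have Hd1' : K%:Z * (e i)%:Z <= t.+1%:Z * sn%:Z by rewrite -!PoszM lez_nat.
have Hd2' : t%:Z * sn%:Z < K%:Z * (e i)%:Z + K%:Z.
  by rewrite -!PoszM -PoszD ltz_nat -mulnSr.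
have Hsm' : sn%:Z <= M%:Z * K%:Z by rewrite -PoszM lez_nat.
have Ht : t.+1%:Z = t%:Z + 1 by rewrite -addn1 PoszD.
have HJ : (M * Jn c)%N%:Z = M%:Z * (Jn c)%:Z by rewrite PoszM.
have HW : (2 * M * Jn c + M + 1)%N%:Z = 2 * (M%:Z * (Jn c)%:Z) + M%:Z + 1.
  rewrite !PoszD !PoszM; ring.
rewrite HJ HW.
clear -Hkey HS1 HS2 HKz Hd1' Hd2' Hsm' Ht Hs.
rewrite -Hs in Hkey.
move: Hkey HS1 HS2 HKz Hd1' Hd2' Hsm' Ht.
move: (Xs V u i) (Gs V c i) (\sum_(j < m) V`_j i * N j) (K%:Z) (sn%:Z) (e i)%:Z (Jn c)%:Z (M%:Z) (t%:Z) (t.+1%:Z) => X G S k s ei J MM tt t1.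
move=> Hkey HS1 HS2 HKz Hd1 Hd2 Hsm Ht.
apply/andP; split.
  rewrite -(ler_pM2l HKz); nia.
rewrite -(ltr_pM2l HKz); nia.
Qed.


Definition Ef d m (V : seq (vec d)) (c : {ffun 'I_m -> nat}) (i : 'I_d) (t : nat) : nat :=
  (t * `|Xs V c i|%N %/ csize c)%N.

Lemma Ef_mono d m (V : seq (vec d)) (c : {ffun 'I_m -> nat}) i t1 t2 : (t1 <= t2)%N -> (Ef V c i t1 <= Ef V c i t2)%N.
Proof. by move=> H; apply: leq_div2r; apply: leq_mul. Qed.

Lemma Ef_K d m (V : seq (vec d)) (c : {ffun 'I_m -> nat}) i :
  (0 < csize c)%N -> Ef V c i (csize c) = `|Xs V c i|%N.
Proof. by move=> H; rewrite /Ef mulKn. Qed.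

Lemma csize_pos d m (V : seq (vec d)) (c : {ffun 'I_m -> nat}) i :
  Xs V c i != 0 -> (0 < csize c)%N.
Proof.
move=> H; rewrite lt0n; apply/negP => /eqP H0; move/negP: H; apply.
have Hc : c = czero m.
  apply/ffunP => j; rewrite ffunE; apply/eqP; rewrite -leqn0 -H0 /csize.
  by rewrite (bigD1 j) //= leq_addr.
by rewrite Hc Xs_zero ffunE.
Qed.

Lemma claim d m (V : seq (vec d)) (M : nat) (c : {ffun 'I_m -> nat}) (i0 : 'I_d) :
  (forall (j : 'I_m) i, `|V`_j i| <= M%:Z) -> (forall i, 0 <= Xs V c i) ->
  minimal V c -> 0 < Xs V c i0 ->
  forall N (u : {ffun 'I_m -> nat}), (csize c - csize u)%N = N -> Inv c u ->
  exists L : seq (vec d),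
  [/\ uniq L,
      (forall v, v \in L -> forall i,
         - ((M * Jn c)%N%:Z) - Gs V c i <= v i <
         - ((M * Jn c)%N%:Z) - Gs V c i + (2 * M * Jn c + M + 1)%N%:Z),
      (`|Xs V c i0|%N <= size L + Ef V c i0 (csize u))%N &
      (forall v, v \in L -> exists w e, [/\ v = vval V w e, cle u w, w != u, cle w c &
           (forall i, (Ef V c i (csize u) <= e i)%N /\ (e i <= `|Xs V c i|%N)%N) /\
           (e i0 < `|Xs V c i0|%N)%N ])].
Proof.
move=> HM Hsol Hmin Hpos.
have HK : (0 < csize c)%N.
  apply: (@csize_pos d m V c i0); by rewrite lt0r_neq0.
have HsnZ i : (`|Xs V c i|%N)%:Z = Xs V c i by rewrite gez0_abs.
elim=> [|N IH] u HN HI.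
  have Hle : cle u c := HI.1.
  have Hsz : csize u = csize c.
    apply/eqP; rewrite eqn_leq; apply/andP; split; last by rewrite -subn_eq0 HN.
    by apply: leq_sum => j _; exact: Hle.
  exists [::]; split => //; by rewrite Hsz Ef_K.
have Hlt : (csize u < csize c)%N by lia.
have [j [Hj HI']] := Inv_step HI Hlt.
set u' := cadd u (cdelta j).
have Hsu' : csize u' = (csize u).+1 by rewrite /u' csize_add csize_delta addn1.
have [L' [HU' Hbox' Hsize' Hst']] := IH u' (ltac:(rewrite Hsu'; lia)) HI'.
set t := csize u.
rewrite Hsu' in Hsize' Hst'.
pose em (a : nat) : {ffun 'I_d -> nat} := [ffun i => if i == i0 then a else Ef V c i t].
pose Lnew := [seq vval V u' (em a) | a <- iota (Ef V c i0 t) (Ef V c i0 t.+1 - Ef V c i0 t)].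
have Hmono i : (Ef V c i t <= Ef V c i t.+1)%N by apply: Ef_mono.
have HtK : (t.+1 <= csize c)%N by [].
have HEsn i t1 : (t1 <= csize c)%N -> (Ef V c i t1 <= `|Xs V c i|%N)%N.
  by move=> H; rewrite -(Ef_K V i HK); apply: Ef_mono.
have Hiota a : (a \in iota (Ef V c i0 t) (Ef V c i0 t.+1 - Ef V c i0 t)) =
    (Ef V c i0 t <= a < Ef V c i0 t.+1)%N.
  by rewrite mem_iota subnKC.
have Hu'u : cle u u' by move=> k; rewrite /u' !ffunE leq_addr.
have Hu'j : u' j = (u j).+1 by rewrite /u' !ffunE eqxx addn1.
have Hemi a i : em a i = if i == i0 then a else Ef V c i t by rewrite ffunE.
exists (Lnew ++ L'); split.
- rewrite cat_uniq HU' andbT; apply/andP; split.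
    rewrite map_inj_in_uniq ?iota_uniq // => a b _ _ Hab.
    have := congr1 (fun f : vec d => f i0) Hab; rewrite !ffunE eqxx.
    move: (Xs V u' i0) => z; lia.
  apply/hasP => [[v Hv /mapP [a Ha Hva]]].
  have [w [e [Hvw Hu'w Hwu' Hwc [He1 He2]]]] := Hst' v Hv.
  move/negP: Hwu'; apply; apply/eqP; symmetry.
  apply: (MC (e1 := em a) (e2 := e) (i0 := i0) Hmin Hu'w Hwc).
  + move=> i; rewrite Hemi; case: (altP (i =P i0)) => [-> | _].
      rewrite Hiota in Ha; case/andP: Ha => _ Ha; apply: ltnW; apply: leq_trans Ha _.
      exact: (He1 i0).1.
    by apply: leq_trans (Hmono i) (He1 i).1.
  + by move=> i; rewrite -HsnZ lez_nat; exact: (He1 i).2.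
  + by rewrite -HsnZ ltz_nat.
  + by rewrite -Hva -Hvw.
- move=> v; rewrite mem_cat => /orP [/mapP [a Ha ->] | Hv]; last exact: Hbox'.
  move=> i; apply: (region (t := t) HM Hsol HI' Hsu').
    rewrite Hemi; case: (altP (i =P i0)) => [-> | _] //.
    by rewrite Hiota in Ha; case/andP: Ha.
  rewrite Hemi; case: (altP (i =P i0)) => [-> | _] //.
  by rewrite Hiota in Ha; case/andP: Ha => _ /ltnW.
- rewrite size_cat size_map size_iota; move: Hsize'; rewrite /t.
  have := Hmono i0; rewrite /t; lia.
- move=> v; rewrite mem_cat => /orP [/mapP [a Ha ->] | Hv].
    exists u', (em a); split => //.
    + apply/negP => /eqP Heq; have := congr1 (fun f : {ffun 'I_m -> nat} => f j) Heq.
      rewrite Hu'j; lia.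
    + exact: HI'.1.
    + split.
        move=> i; rewrite Hemi; case: (altP (i =P i0)) => [-> | _].
          rewrite Hiota in Ha; case/andP: Ha => Ha1 Ha2; split => //.
          apply: ltnW; apply: leq_trans Ha2 _; exact: HEsn.
        split => //; apply: HEsn; exact: ltnW.
      rewrite Hemi eqxx; rewrite Hiota in Ha; case/andP: Ha => _ Ha.
      apply: leq_trans Ha _; exact: HEsn.
  have [w [e [Hvw Hu'w Hwu' Hwc [He1 He2]]]] := Hst' v Hv.
  exists w, e; split => //.
  + by move=> k; apply: leq_trans (Hu'u k) (Hu'w k).
  + apply/negP => /eqP Heq; have := Hu'w j; rewrite Heq Hu'j; lia.
  + split => // i; have [H1 H2] := He1 i; split => //; apply: leq_trans (Hmono i) H1.
Qed.


Lemma leq_expl (a b n : nat) : (a <= b)%N -> (a ^ n <= b ^ n)%N.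
Proof. by move=> H; elim: n => // n IH; rewrite !expnS leq_mul. Qed.

Lemma key d m (V : seq (vec d)) (M : nat) (c : {ffun 'I_m -> nat}) (i0 : 'I_d) :
  size V = m -> uniq V -> (forall (j : 'I_m) i, `|V`_j i| <= M%:Z) ->
  (forall i, 0 <= Xs V c i) -> minimal V c ->
  (`|Xs V c i0|%N <= ((2 * M + 1) ^ d * M + 1) ^ d)%N.
Proof.
move=> HV HU HM Hsol Hmin.
have [H0 | Hpos] := eqVneq (Xs V c i0) 0; first by rewrite H0.
have {}Hpos : 0 < Xs V c i0 by rewrite lt0r Hpos Hsol.
have Hcz : csize (czero m) = 0%N by rewrite /csize big1 // => j _; rewrite ffunE.
have [L [HUL Hbox Hsize _]] := claim HM Hsol Hmin Hpos (erefl _) (Inv0 c).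
rewrite Hcz /Ef mul0n div0n addn0 in Hsize.
have Hw : (0 < 2 * M * Jn c + M + 1)%N by rewrite addn1.
have HL := box_count Hw HUL Hbox.
have HJ := J_bound HV HU HM Hsol Hmin Hpos.
apply: (leq_trans Hsize); apply: (leq_trans HL).
have Hle : (2 * M * Jn c + M + 1 <= (2 * M + 1) ^ d * M + 1)%N.
  move: HJ; move: ((2 * M + 1) ^ d)%N (Jn c) => n J HJ; nia.
exact: leq_expl.
Qed.

Lemma csize_le m (a b : {ffun 'I_m -> nat}) : cle a b -> (csize a <= csize b)%N.
Proof. by move=> H; apply: leq_sum => j _; exact: H. Qed.

Lemma csize_pos0 m (a : {ffun 'I_m -> nat}) : a <> czero m -> (0 < csize a)%N.
Proof.
move=> H; rewrite lt0n; apply/negP => /eqP H0; apply: H.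
apply/ffunP => j; rewrite ffunE; apply/eqP; rewrite -leqn0 -H0 /csize.
by rewrite (bigD1 j) //= leq_addr.
Qed.

Lemma csize_sub m (a b : {ffun 'I_m -> nat}) : cle a b ->
  csize b = (csize a + csize (csub b a))%N.
Proof. by move=> H; rewrite -csize_add cadd_sub. Qed.

Lemma csub_zero m (a b : {ffun 'I_m -> nat}) : cle a b -> csub b a = czero m -> a = b.
Proof.
move=> H H0; apply/ffunP => j; have := congr1 (fun f : {ffun 'I_m -> nat} => f j) H0.
rewrite !ffunE; have := H j; move: (a j) (b j) => x y; lia.
Qed.

Lemma extract d m (V : seq (vec d)) (c : {ffun 'I_m -> nat}) i0 :
  (forall i, 0 <= Xs V c i) -> 0 < Xs V c i0 ->
  exists c1, [/\ cle c1 c, (forall i, 0 <= Xs V c1 i), (forall i, Xs V c1 i <= Xs V c i),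
    0 < Xs V c1 i0 & minimal V c1].
Proof.
have : (csize c <= csize c)%N by [].
move: {2}(csize c) => n; elim: n c => [|n IH] c Hn Hsol Hpos.
  have Hc : c = czero m.
    apply/ffunP => j; rewrite ffunE; apply/eqP; rewrite -leqn0; apply: leq_trans Hn.
    by rewrite /csize (bigD1 j) //= leq_addr.
  by move: Hpos; rewrite Hc Xs_zero ffunE ltxx.
case: (classic (minimal V c)) => Hm.
  by exists c; split => // j.
have [c'' Hc''] : exists c'', ~ (cle c'' c -> (forall i, 0 <= Xs V c'' i) ->
    (forall i, Xs V c'' i <= Xs V c i) -> c'' = czero m \/ c'' = c).
  by apply: not_all_ex_not.
have [Hle H1] := imply_to_and _ _ Hc''.
have [Hs H2] := imply_to_and _ _ H1.
have [Hx H3] := imply_to_and _ _ H2.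
have [Hnz Hnc] := not_or_and _ _ H3.
have Hsz := csize_sub Hle.
have Hp1 := csize_pos0 Hnz.
have Hp2 : (0 < csize (csub c c''))%N.
  apply: csize_pos0 => H0; apply: Hnc; exact: csub_zero.
case: (ltrP 0 (Xs V c'' i0)) => Hi.
  have [c1 [H1a H1b H1c H1d H1e]] := IH c'' (ltac:(lia)) Hs Hi.
  exists c1; split => //.
    by move=> j; apply: leq_trans (H1a j) (Hle j).
  by move=> i; apply: le_trans (H1c i) (Hx i).
have Hs' i : 0 <= Xs V (csub c c'') i by rewrite Xs_sub // vecBE subr_ge0.
have Hp' : 0 < Xs V (csub c c'') i0.
  rewrite Xs_sub // vecBE; move: Hpos Hi; move: (Xs V c i0) (Xs V c'' i0) => a b; lia.
have [c1 [H1a H1b H1c H1d H1e]] := IH (csub c c'') (ltac:(lia)) Hs' Hp'.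
exists c1; split => //.
  by move=> j; apply: leq_trans (H1a j) _; rewrite ffunE leq_subr.
move=> i; apply: le_trans (H1c i) _; rewrite Xs_sub // vecBE.
have := Hs i; move: (Xs V c i) (Xs V c'' i) => a b; lia.
Qed.

Lemma cover_sol d m (V : seq (vec d)) (M : nat) (Q : seq 'I_d) :
  size V = m -> uniq V -> (forall (j : 'I_m) i, `|V`_j i| <= M%:Z) ->
  forall c : {ffun 'I_m -> nat}, (forall i, 0 <= Xs V c i) ->
  exists cx, [/\ cle cx c, (forall i, 0 <= Xs V cx i), (forall i, Xs V cx i <= Xs V c i),
    (forall i, i \in Q -> 0 < Xs V c i -> 0 < Xs V cx i) &
    (forall i, Xs V cx i <= (size Q * ((2 * M + 1) ^ d * M + 1) ^ d)%N%:Z)].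
Proof.
move=> HV HU HM; elim: Q => [|i Q IH] c Hsol.
  exists (czero m); split => //; try by move=> i; rewrite Xs_zero ffunE.
  by move=> j; rewrite ffunE.
set B := (((2 * M + 1) ^ d * M + 1) ^ d)%N.
case: (ltrP 0 (Xs V c i)) => Hi; last first.
  have [cx [H1 H2 H3 H4 H5]] := IH c Hsol.
  exists cx; split => //.
  - move=> k; rewrite inE => /orP [/eqP -> | Hk] Hp; last exact: H4.
    by move: Hi Hp; move: (Xs V c i) => a; lia.
  - move=> k; apply: le_trans (H5 k) _; rewrite lez_nat /=; lia.
have [c1 [H1a H1b H1c H1d H1e]] := extract Hsol Hi.
have Hk1 k : Xs V c1 k <= B%:Z.
  have := key k HV HU HM H1b H1e; rewrite -lez_nat gez0_abs //.
set r := csub c c1.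
have Hr : forall k, Xs V r k = Xs V c k - Xs V c1 k by move=> k; rewrite Xs_sub // vecBE.
have Hsr k : 0 <= Xs V r k by rewrite Hr subr_ge0.
have [cx [H1 H2 H3 H4 H5]] := IH r Hsr.
exists (cadd c1 cx); split.
- move=> j; rewrite ffunE; have := H1 j; rewrite ffunE; have := H1a j.
  move: (c j) (c1 j) (cx j) => a b x; lia.
- by move=> k; rewrite Xs_add vecDE addr_ge0.
- move=> k; rewrite Xs_add vecDE; have := H3 k; rewrite Hr.
  move: (Xs V c k) (Xs V c1 k) (Xs V cx k) => a b x; lia.
- move=> k; rewrite inE Xs_add vecDE => /orP [/eqP -> | Hk] Hp.
    have := H2 i; move: H1d; move: (Xs V c1 i) (Xs V cx i) => a b; lia.
  case: (ltrP 0 (Xs V c1 k)) => Hc1.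
    have := H2 k; move: Hc1; move: (Xs V c1 k) (Xs V cx k) => a b; lia.
  have Hp' : 0 < Xs V r k.
    rewrite Hr; move: Hp Hc1; move: (Xs V c k) (Xs V c1 k) => a b; lia.
  have := H4 k Hk Hp'; have := H1b k; move: (Xs V c1 k) (Xs V cx k) => a b; lia.
- move=> k; rewrite Xs_add vecDE; have := H5 k; have := Hk1 k.
  rewrite /= -/B; move: (Xs V c1 k) (Xs V cx k) => a b; lia.
Qed.


Lemma core d (A : seq (vec d)) (M : nat) (y : vec d) :
  (forall a, a \in A -> forall i, `|a i| <= M%:Z) ->
  minimal_in (in_monoid A) y -> (forall i, 0 <= y i) ->
  forall i, (`|y i|%N <= d * ((2 * M + 1) ^ d * M + 1) ^ d)%N.
Proof.
move=> HA [Hy Hmin] Hy0.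
set V := undup A.
have HAV : {subset A <= V} by move=> a; rewrite mem_undup.
have HVA : {subset V <= A} by move=> a; rewrite mem_undup.
have HU : uniq V := undup_uniq A.
have HM : forall (j : 'I_(size V)) i, `|V`_j i| <= M%:Z.
  move=> j i; apply: HA; apply: HVA; apply: mem_nth; exact: ltn_ord.
have [c Hc] := in_monoid_rep HAV Hy.
have Hsol : forall i, 0 <= Xs V c i by move=> i; rewrite -Hc.
have [cx [H1 H2 H3 H4 H5]] := cover_sol (enum 'I_d) (erefl (size V)) HU HM Hsol.
have Hx : in_monoid A (Xs V cx) := in_monoid_Xs cx (erefl _) HVA.
have Hvle : vle (Xs V cx) y.
  move=> i; have := H3 i; have := H2 i; rewrite -Hc.
  have := H4 i (mem_enum _ i); rewrite -Hc; have := Hy0 i.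
  move: (Xs V cx i) (y i) => a b hb hab ha hab2.
  rewrite -lez_nat !gez0_abs //.
  case: (ltrP 0 b) => hb'.
    by rewrite !gtr0_sgz //; apply: hab.
  have -> : b = 0 by apply/eqP; rewrite eq_le hb' hb.
  have -> : a = 0 by apply/eqP; rewrite eq_le ha andbT; apply: le_trans hab2 hb'.
  by [].
have Hxy := Hmin _ Hx Hvle.
move=> i; rewrite -Hxy; have := H5 i; rewrite size_enum_ord -lez_nat gez0_abs //.
Qed.

Definition sgv d (y : vec d) (i : 'I_d) : int := if y i < 0 then -1 else 1.
Definition flipv d (y : vec d) (v : vec d) : vec d := [ffun i => sgv y i * v i].

Lemma flipvK d (y v : vec d) : flipv y (flipv y v) = v.
Proof.
apply/ffunP => i; rewrite !ffunE mulrA /sgv; case: (y i < 0); rewrite ?mul1r //.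
Qed.

Lemma flipvD d (y v w : vec d) : flipv y (v + w) = flipv y v + flipv y w.
Proof. by apply/ffunP => i; rewrite !ffunE mulrDr. Qed.

Lemma flipv0 d (y : vec d) : flipv y 0 = 0.
Proof. by apply/ffunP => i; rewrite !ffunE mulr0. Qed.

Lemma flipv_abs d (y v : vec d) i : `|flipv y v i|%N = `|v i|%N.
Proof. by rewrite ffunE /sgv; case: (y i < 0); rewrite ?mulN1r ?mul1r ?abszN. Qed.

Lemma flipv_mon d (y : vec d) (A : seq (vec d)) x :
  in_monoid A x -> in_monoid (map (flipv y) A) (flipv y x).
Proof.
elim=> [|x' a _ IH Ha]; first by rewrite flipv0; exact: in_monoid0.
by rewrite flipvD; apply: in_monoidS => //; exact: map_f.
Qed.

Lemma flipv_mon' d (y : vec d) (A : seq (vec d)) x :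
  in_monoid (map (flipv y) A) x -> in_monoid A (flipv y x).
Proof.
elim=> [|x' a _ IH Ha]; first by rewrite flipv0; exact: in_monoid0.
rewrite flipvD; apply: in_monoidS => //.
by case/mapP: Ha => a' Ha' ->; rewrite flipvK.
Qed.

Lemma flipv_vle d (y x y' : vec d) : vle x (flipv y y') -> vle (flipv y x) y'.
Proof.
move=> H i; have [H1 H2] := H i; move: H1 H2; rewrite !ffunE /sgv.
case: (y i < 0); rewrite ?mulN1r ?mul1r ?sgzN ?abszN //.
by move=> H1 H2; rewrite H1 opprK.
Qed.

Theorem lemma10 (d : nat) (A : seq (vec d)) (y : vec d) :
  minimal_in (in_monoid A) y ->
  (vnorm y <= d * (2 + (1 + 2 * snorm A) ^ d * snorm A) ^ d)%N.
Proof.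
move=> [Hy Hmin].
set M := snorm A.
pose A' := map (flipv y) A.
have HA' : forall a, a \in A' -> forall i, `|a i| <= M%:Z.
  move=> a /mapP [a0 Ha0 ->] i.
  rewrite -abszE lez_nat flipv_abs.
  apply: leq_trans (_ : vnorm a0 <= M)%N.
    by rewrite /vnorm; apply: (leq_bigmax (F := fun i => `|a0 i|%N)).
  by rewrite /M /snorm; apply: (leq_bigmax_seq (F := fun a => vnorm a)).
have Hmin' : minimal_in (in_monoid A') (flipv y y).
  split; first exact: flipv_mon.
  move=> x Hx Hv.
  have := Hmin _ (flipv_mon' Hx) (flipv_vle Hv) => Hxy.
  by have := congr1 (flipv y) Hxy; rewrite flipvK.
have Hpos : forall i, 0 <= flipv y y i.
  move=> i; rewrite ffunE /sgv; case: ltrP => h; rewrite ?mulN1r ?mul1r; lia.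
have Hc := core HA' Hmin' Hpos.
have Hb : (vnorm y <= d * ((2 * M + 1) ^ d * M + 1) ^ d)%N.
  apply/bigmax_leqP => i _; rewrite -(flipv_abs y y i); exact: Hc.
apply: leq_trans Hb _.
rewrite leq_mul2l; apply/orP; right; apply: leq_expl.
have -> : (2 * M + 1 = 1 + 2 * M)%N by rewrite addnC.
move: ((1 + 2 * M) ^ d * M)%N => z; lia.
Qed.
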